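(* Let $m_\infty(0,0)=(\mu_{ij})_{0\le i,j<\infty}$ be a semi-infinite complex matrix, let $\Lambda$ be the semi-infinite shift matrix $\Lambda_{ij}=\delta_{j-i,1}$, and set $m_\infty(t,s)=e^{\sum_{i\ge1}t_i\Lambda^i}\,m_\infty(0,0)\,e^{-\sum_{i\ge1}s_i\Lambda^{\top i}}$ and $\tau_n(t,s)=\det m_n(t,s)$, where $m_n(t,s)$ is the upper-left $n\times n$ block of $m_\infty(t,s)$. Then for $n>0$, $$\tau_n(t,s)=\sum_{\lambda,\nu}\det\big(m^{\lambda,\nu}\big)\,s_\lambda(t)\,s_\nu(-s),\qquad m^{\lambda,\nu}=\big(\mu_{\lambda_i-i+n,\;\nu_j-j+n}\big)_{1\le i,j\le n},$$ the sum being over all Young diagrams $\lambda,\nu$ with at most $n$ rows.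
   Context: Schur polynomials: $e^{\sum_{i\ge1}t_iz^i}=\sum_{k\ge0}p_k(t)z^k$, $p_k=0$ for $k<0$; for a Young diagram $\lambda_1\ge\dots\ge\lambda_n\ge0$, $s_\lambda(t)=\det(p_{\lambda_i-i+j}(t))_{1\le i,j\le n}$. Everything is understood as formal power series in $t=(t_1,t_2,\dots)$, $s=(s_1,s_2,\dots)$. *)

(* Defs.v *)
(* Formal power series in t = (t_1,t_2,...), s = (s_1,s_2,...)
   are handled through their weighted truncations (weight of t_i and s_i is i):
   a formal power series identity F = G holds iff for every D, the coefficients
   of all monomials of weight <= D agree; these coefficients only involve the
   variables t_1..t_D, s_1..s_D, which we model in the polynomial ring
   {mpoly CC[D + D]} (variable k < D is t_(k+1), variable D + k is s_(k+1)). *)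
From HB Require Import structures.
From mathcomp Require Import all_boot all_algebra.
From mathcomp Require Import Rstruct complex.
From mathcomp Require Import mpoly.
Set Implicit Arguments. Unset Strict Implicit. Unset Printing Implicit Defensive.
Import GRing.Theory.
Local Open Scope ring_scope.

Definition CC : numClosedFieldType := complex Rdefinitions.R.

(* p_k(x) = coefficient of z^k in exp(sum_{i>=1} x_i z^i)
          = sum_{j <= k} (1/j!) [z^k] (sum_{1 <= i <= k} x_i z^i)^j   (x 0 unused) *)
Definition pk (F : fieldType) (A : comAlgType F) (x : nat -> A) (k : nat) : A :=
  let X : {poly A} := \sum_(1 <= i < k.+1) (x i)%:P * 'X^i in
  \sum_(j < k.+1) ((j`!)%:R^-1 : F) *: (X ^+ j)`_k.

Definition pkz (F : fieldType) (A : comAlgType F) (x : nat -> A) (k : int) : A :=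
  match k with Posz m => pk x m | Negz _ => 0 end.

(* Schur polynomial s_lam(x) = det (p_{lam_i - i + j}(x))_{1 <= i,j <= n}
   (0-based indices here: lam_i - i + j is unchanged). *)
Definition schur (F : fieldType) (A : comAlgType F) (n : nat) (lam : 'I_n -> nat)
    (x : nat -> A) : A :=
  \det (\matrix_(i < n, j < n) pkz x ((lam i)%:Z - (i : nat)%:Z + (j : nat)%:Z)).

Definition tvar (D : nat) (i : nat) : {mpoly CC[D + D]} :=
  if (0 < i <= D)%N then oapp (fun k : 'I_(D + D) => 'X_k) 0 (insub i.-1) else 0.
Definition svar (D : nat) (i : nat) : {mpoly CC[D + D]} :=
  if (0 < i <= D)%N then oapp (fun k : 'I_(D + D) => 'X_k) 0 (insub (D + i.-1)%N) else 0.

Definition weight (D : nat) (m : 'X_{1..D + D}) : nat :=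
  \sum_(k < D + D) (if (k < D)%N then k.+1 else (k - D).+1) * m k.

(* entry (i,k) of exp(sum_l x_l Lambda^l) = sum_r p_r(x) Lambda^r, i.e. p_{k-i}(x) *)
Definition expLam (D : nat) (x : nat -> {mpoly CC[D + D]}) (i k : nat) : {mpoly CC[D + D]} :=
  pkz x (k%:Z - i%:Z).

(* upper-left n x n block of m_oo(t,s) = exp(sum t_l Lambda^l) m_oo(0,0) exp(-sum s_l Lambda^T^l),
   with the (infinite, formally convergent) inner sums truncated to indices < n + D;
   the omitted terms have weight > D. *)
Definition mts (D : nat) (mu : nat -> nat -> CC) (n : nat) : 'M[{mpoly CC[D + D]}]_n :=
  \matrix_(i < n, j < n)
     \sum_(k < n + D) \sum_(l < n + D)
        expLam (tvar D) i k * (mu k l)%:MP * expLam (fun r => - svar D r) j l.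

(* Young diagrams with at most n rows, encoded as nonincreasing n-tuples
   lam_1 >= ... >= lam_n >= 0 (parts bounded by D in the truncation) *)
Definition young (n D : nat) (lam : {ffun 'I_n -> 'I_D.+1}) : bool :=
  [forall i : 'I_n, forall j : 'I_n, (i <= j)%N ==> (lam j <= lam i)%N].

(* m^{lam,nu} = (mu_{lam_i - i + n, nu_j - j + n})_{1 <= i,j <= n}  (0-based: lam_i + (n - 1 - i)) *)
Definition mlamnu (mu : nat -> nat -> CC) (n : nat) (lam nu : 'I_n -> nat) : 'M[CC]_n :=
  \matrix_(i < n, j < n) mu (lam i + (n - i.+1))%N (nu j + (n - j.+1))%N.

(* truncation of  sum_{lam,nu} det(m^{lam,nu}) s_lam(t) s_nu(-s)  to diagrams with
   parts <= D (the omitted terms have weight > D) *)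
Definition rhs (D : nat) (mu : nat -> nat -> CC) (n : nat) : {mpoly CC[D + D]} :=
  \sum_(lam : {ffun 'I_n -> 'I_D.+1} | young lam)
   \sum_(nu : {ffun 'I_n -> 'I_D.+1} | young nu)
     (\det (mlamnu mu (fun i => (lam i : nat)) (fun j => (nu j : nat))))%:MP
     * schur (fun i => (lam i : nat)) (tvar D)
     * schur (fun j => (nu j : nat)) (fun r => - svar D r).

(* Main.v *)
Require Import Defs.
From HB Require Import structures.
From mathcomp Require Import all_boot all_algebra all_fingroup.
From mathcomp Require Import Rstruct complex.
From mathcomp Require Import mpoly.
From mathcomp Require Import zify ring.
Set Implicit Arguments. Unset Strict Implicit. Unset Printing Implicit Defensive.
Import GRing.Theory.
Local Open Scope ring_scope.

Section CB.
Variable R : comNzRingType.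

Lemma det_expand n N (X : 'I_n -> 'I_N -> R) (Y : 'I_N -> 'I_n -> R) :
  \det (\matrix_(i, j) \sum_k X i k * Y k j) =
  \sum_(f : {ffun 'I_n -> 'I_N}) (\prod_i X i (f i)) * \det (\matrix_(i, j) Y (f i) j).
Proof.
rewrite /determinant.
have E s : \prod_i (\matrix_(i, j) \sum_k X i k * Y k j) i (s i) =
   \sum_(f : {ffun 'I_n -> 'I_N}) \prod_i (X i (f i) * Y (f i) (s i)).
  rewrite -(bigA_distr_bigA (fun i k => X i k * Y k (s i))) /=; apply: eq_bigr => i _; by rewrite mxE.
under eq_bigr => s _ do rewrite E big_distrr /=.
rewrite exchange_big /=; apply: eq_bigr => f _.
rewrite big_distrr /=; apply: eq_bigr => s _.
rewrite big_split /= mulrCA; congr (_ * (_ * _)).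
by apply: eq_bigr => i _; rewrite mxE.
Qed.

Lemma det_col_perm n (s : 'S_n) (A : 'M[R]_n) :
  \det (col_perm s A) = (-1) ^+ s * \det A.
Proof. by rewrite col_permE det_mulmx det_perm odd_permV mulrC. Qed.

Lemma det_row_perm n (s : 'S_n) (A : 'M[R]_n) :
  \det (row_perm s A) = (-1) ^+ s * \det A.
Proof. by rewrite -det_tr tr_row_perm det_col_perm det_tr. Qed.

End CB.

Section Sort.
Variables n D : nat.
Local Notation F := {ffun 'I_n -> 'I_(n + D)}.
Local Notation L := {ffun 'I_n -> 'I_D.+1}.

Lemma K_lt (l : L) (i : 'I_n) : (l i + (n - i.+1) < n + D)%N.
Proof. have := ltn_ord (l i); have := ltn_ord i; lia. Qed.

Definition K (l : L) : F := [ffun i => Ordinal (K_lt l i)].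

Lemma KE l i : (K l i : nat) = (l i + (n - i.+1))%N.
Proof. by rewrite ffunE. Qed.

Definition rk (f : F) (i : 'I_n) : nat := (\sum_j ((f i < f j)%N : nat))%N.
Definition cb (f : F) (i : 'I_n) : nat := (\sum_j ((f j < f i)%N : nat))%N.

Lemma sum_eq1 (b : 'I_n) : (\sum_j ((j == b) : nat))%N = 1%N.
Proof.
rewrite (bigD1 b) //= eqxx big1 // => j /negPf -> //.
Qed.

Lemma sum_neq1 (b : 'I_n) : (\sum_j ((j != b) : nat))%N = n.-1.
Proof.
rewrite (bigD1 b) //= eqxx add0n.
rewrite (eq_bigr (fun _ => 1%N)) => [|j ->//].
by rewrite sum1_card cardC1 card_ord.
Qed.

Lemma rk_lt (f : F) i : (rk f i < n)%N.
Proof.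
have H : (rk f i <= \sum_j ((j != i) : nat))%N.
  apply: leq_sum => j _; case: eqP => [->|]; first by rewrite ltnn.
  by case: (_ < _)%N.
rewrite sum_neq1 in H; have := ltn_ord i; lia.
Qed.

Lemma rk_mono (f : F) a b : (f a < f b)%N -> (rk f b < rk f a)%N.
Proof.
move=> ab.
have H : (\sum_j (((f b < f j)%N : nat) + ((j == b) : nat)) <= rk f a)%N.
  apply: leq_sum => j _; case: eqP => [->|_]; first by rewrite ltnn ab.
  rewrite addn0; case: ltnP => //= bj; have : (f a < f j)%N by apply: ltn_trans bj.
  by move->.
by rewrite big_split /= sum_eq1 addn1 in H.
Qed.

Lemma rk_inj (f : F) : injective f -> forall a b, rk f a = rk f b -> a = b.
Proof.
move=> fi a b E; case: (ltngtP (f a) (f b)) => [ab|ab|ab].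
- by have := rk_mono ab; rewrite E ltnn.
- by have := rk_mono ab; rewrite E ltnn.
- by apply: fi; apply: val_inj.
Qed.

Lemma cb_rk (f : F) i : injective f -> (cb f i + rk f i = n.-1)%N.
Proof.
move=> fi; rewrite /cb /rk -big_split /= -(sum_neq1 i).
apply: eq_bigr => j _; case: eqP => [->|ne]; first by rewrite ltnn.
case: (ltngtP (f j) (f i)) => //= E.
by case: ne; apply: fi; apply: val_inj.
Qed.

Lemma sum_eqy (f : F) y : injective f -> (\sum_j ((f j == y :> nat) : nat) <= 1)%N.
Proof.
move=> fi; case: (pickP (fun j => f j == y :> nat)) => [j0 /eqP H|H].
  rewrite (bigD1 j0) //= H eqxx big1 // => j ne.
  case: eqP => // E; case/negP: ne; apply/eqP; apply: fi; apply: val_inj => /=; by rewrite E H.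
by rewrite big1 // => j _; rewrite H.
Qed.

Lemma sum_window (f : F) x y : injective f ->
  (\sum_j (((x <= f j)%N && (f j < y)%N) : nat) <= y - x)%N.
Proof.
move=> fi; elim: y => [|y IH].
  by rewrite big1 // => j _; rewrite ltn0 andbF.
have H : (\sum_j (((x <= f j)%N && (f j < y.+1)%N) : nat) =
   \sum_j (((x <= f j)%N && (f j < y)%N) : nat) + ((x <= y)%N : nat) * \sum_j ((f j == y :> nat) : nat))%N.
  rewrite big_distrr -big_split /=; apply: eq_bigr => j _.
  case: (ltngtP (f j) y) => E.
  - by rewrite andbT muln0 addn0 ltnS (ltnW E) !andbT.
  - by rewrite andbF muln0 ltnS (leqNgt (f j)) E andbF.
  - by rewrite E ltnSn andbF andbT muln1.
rewrite H; have := sum_eqy y fi; case: (leqP x y) => xy; lia.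
Qed.

Lemma cb_le (f : F) i : injective f -> (cb f i <= f i)%N.
Proof.
move=> fi; have := sum_window 0 (f i) fi; rewrite subn0; apply: leq_trans.
by apply: leq_sum => j _.
Qed.

Lemma rk_le (f : F) i : injective f -> (rk f i <= n + D - (f i).+1)%N.
Proof.
move=> fi; have := sum_window (f i).+1 (n + D) fi; apply: leq_trans.
by apply: leq_sum => j _; rewrite ltn_ord andbT.
Qed.

Definition rkf (f : F) : {ffun 'I_n -> 'I_n} := [ffun i => Ordinal (rk_lt f i)].
Definition sig (f : F) : 'S_n := insubd (1%g : 'S_n) (rkf f).

Lemma sigE (f : F) i : injective f -> (sig f i : nat) = rk f i.
Proof.
move=> fi; have inj : injectiveb (rkf f).
  apply/injectiveP => a b; rewrite !ffunE => /(congr1 val) /= E.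
  exact: rk_inj fi _ _ E.
by rewrite /sig -pvalE insubdK // ffunE.
Qed.


Definition lamof (f : F) : L := [ffun r => inord (f (((sig f)^-1)%g r) - (n - r.+1))].
Definition hh (p : L * 'S_n) : F := [ffun i => K p.1 (p.2 i)].
Definition hh' (f : F) : L * 'S_n := (lamof f, sig f).

Lemma lamof_sig (f : F) a : injective f -> (lamof f (sig f a) : nat) = (f a - cb f a)%N.
Proof.
move=> fi; rewrite ffunE permK sigE //.
have := cb_rk a fi; have := rk_le a fi; have := cb_le a fi; have := ltn_ord (f a).
have := ltn_ord a => *.
rewrite inordK; lia.
Qed.

Lemma hh_hh' (f : F) : injective f -> hh (hh' f) = f.
Proof.
move=> fi; apply/ffunP => i; apply: val_inj; rewrite ffunE /= KE lamof_sig // sigE //.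
have := cb_rk i fi; have := cb_le i fi; have := ltn_ord i; lia.
Qed.

Lemma young_dec (l : L) : young l -> forall i j : 'I_n, (i < j)%N -> (K l j < K l i)%N.
Proof.
move/forallP => Y i j ij; move: (Y i) => /forallP/(_ j)/implyP/(_ (ltnW ij)).
rewrite !KE; have := ltn_ord j; lia.
Qed.

Lemma young_lt (l : L) : young l -> forall i j, (K l i < K l j)%N = (j < i)%N.
Proof.
move=> Y i j; case: (ltngtP i j) => ij.
- by apply/negbTE; rewrite -leqNgt ltnW // young_dec.
- by apply: young_dec.
- by move/val_inj: ij => ->; rewrite ltnn.
Qed.

Lemma sum_lt m : (\sum_(j < n) ((j < m)%N : nat))%N = minn m n.
Proof.
elim: n => [|k IH]; first by rewrite big_ord0; lia.
rewrite big_ord_recr /= IH; case: (ltnP k m) => /= km; lia.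
Qed.

Lemma rk_hh (l : L) (s : 'S_n) i : young l -> rk (hh (l, s)) i = s i.
Proof.
move=> Y; rewrite /rk.
have Eh k : hh (l, s) k = K l (s k) by rewrite ffunE.
rewrite (eq_bigr (fun j => ((s j < s i)%N : nat))); last by move=> j _; rewrite !Eh young_lt.
rewrite (reindex_inj (@perm_inj _ (s^-1)%g)) /=.
rewrite (eq_bigr (fun j : 'I_n => ((j < s i)%N : nat))); last by move=> j _; rewrite permKV.
by rewrite sum_lt; have := ltn_ord (s i); lia.
Qed.

Lemma inj_hh (l : L) (s : 'S_n) : young l -> injective (hh (l, s)).
Proof.
move=> Y a b.
have Eh k : hh (l, s) k = K l (s k) by rewrite ffunE.
rewrite !Eh => E.
apply: (@perm_inj _ s); apply: val_inj.
case: (ltngtP (s a) (s b)) => // ab.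
- by have := young_dec Y ab; rewrite E ltnn.
- by have := young_dec Y ab; rewrite E ltnn.
Qed.

Lemma sig_hh (l : L) (s : 'S_n) : young l -> sig (hh (l, s)) = s.
Proof.
move=> Y; apply/permP => i; apply: val_inj => /=; rewrite sigE ?rk_hh //; exact: inj_hh.
Qed.

Lemma lamof_hh (l : L) (s : 'S_n) : young l -> lamof (hh (l, s)) = l.
Proof.
move=> Y; apply/ffunP => r; rewrite ffunE sig_hh // ffunE /= permKV KE addnK.
by rewrite inord_val.
Qed.

Lemma young_lamof (f : F) : injective f -> young (lamof f).
Proof.
move=> fi; apply/forallP => r; apply/forallP => r'; apply/implyP => le.
have [a Ea] : exists a, r = sig f a by exists (((sig f)^-1)%g r); rewrite permKV.
have [b Eb] : exists b, r' = sig f b by exists (((sig f)^-1)%g r'); rewrite permKV.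
subst r r'; rewrite !lamof_sig //; rewrite !sigE // in le.
have ba : (f b <= f a)%N.
  case: (ltnP (f a) (f b)) => // ab; have := rk_mono ab; lia.
have E : (cb f a = cb f b + \sum_j (((f b <= f j)%N && (f j < f a)%N) : nat))%N.
  rewrite /cb -big_split /=; apply: eq_bigr => j _.
  case: (ltnP (f j) (f b)) => jb /=.
  - by rewrite (leq_trans jb ba).
  - by rewrite add0n.
have := sum_window (f b) (f a) fi; have := cb_le a fi; have := cb_le b fi; lia.
Qed.

Variable R : comNzRingType.

Lemma sort_sum (Phi : F -> R) (a : 'I_n -> 'I_(n + D) -> R) :
  (forall f : F, ~~ injectiveb f -> Phi f = 0) ->
  (forall (f : F) (s : 'S_n), Phi [ffun i => f (s i)] = (-1) ^+ s * Phi f) ->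
  \sum_(f : F) (\prod_i a i (f i)) * Phi f =
  \sum_(l : L | young l) \det (\matrix_(i, j) a i (K l j)) * Phi (K l).
Proof.
move=> H0 Hs.
rewrite (bigID (fun f : F => injectiveb f)) /= [X in _ + X]big1 ?addr0; last first.
  by move=> f nf; rewrite H0 ?mulr0.
rewrite (reindex_onto hh hh'); last by move=> f /injectiveP; exact: hh_hh'.
have -> : \sum_(p | injectiveb (hh p) && (hh' (hh p) == p)) (\prod_i a i (hh p i)) * Phi (hh p)
   = \sum_(p | young p.1 && true) (\prod_i a i (hh (p.1, p.2) i)) * Phi (hh (p.1, p.2)).
  apply: eq_big => [[l s]|[l s] _] //=.
  apply/idP/idP.
  - case/andP => /injectiveP inj /eqP E; rewrite andbT -[l]/((l, s).1) -E /=.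
    exact: young_lamof.
  - rewrite andbT => Y; apply/andP; split; first by apply/injectiveP; exact: inj_hh.
    by rewrite /hh' lamof_hh // sig_hh.
rewrite -(pair_big_dep (fun l : L => young l) (fun _ _ => true)
   (fun l s => (\prod_i a i (hh (l, s) i)) * Phi (hh (l, s)))) /=.
apply: eq_bigr => l Y.
rewrite /determinant big_distrl /=; apply: eq_bigr => s _.
have -> : hh (l, s) = [ffun i => K l (s i)] by [].
rewrite Hs mulrCA -mulrA; congr (_ * (_ * _)).
by apply: eq_bigr => i _; rewrite mxE ffunE.
Qed.

End Sort.

Lemma sign_alg (R : comNzRingType) (e x y z : R) : e * e = 1 ->
  (e * x) * ((e * y) * z) = z * x * y.
Proof.
move=> ee; have -> : (e * x) * ((e * y) * z) = (e * e) * (z * x * y) by ring.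
by rewrite ee mul1r.
Qed.

Lemma sign_alg2 (R : comNzRingType) (e x y z s1 s2 : R) :
  x = e * s1 -> y = e * s2 -> e * e = 1 -> x * (y * z) = z * s1 * s2.
Proof. by move=> -> -> ee; apply: sign_alg. Qed.

Section Main.
Variables (D n : nat).
Local Notation RR := {mpoly CC[D + D]}.
Local Notation L := {ffun 'I_n -> 'I_D.+1}.

Definition revp : 'S_n := perm (@rev_ord_inj n).

Lemma schurK (x : nat -> RR) (l : L) :
  \det (\matrix_(i, j) expLam x i (K l j)) =
  (-1) ^+ revp * schur (fun i => (l i : nat)) x.
Proof.
rewrite -det_tr /schur -det_col_perm; congr (\det _).
apply/matrixP => i j; rewrite !mxE /expLam KE permE /=.
congr (pkz x _); have := ltn_ord i; have := ltn_ord j; lia.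
Qed.


Variable mu : nat -> nat -> CC.
Local Notation a := (fun (i : 'I_n) (k : 'I_(n + D)) => expLam (tvar D) i k).
Local Notation b := (fun (i : 'I_n) (k : 'I_(n + D)) => expLam (fun r => - svar D r) i k).
Local Notation c := (fun (k l : 'I_(n + D)) => (mu k l)%:MP : RR).

Lemma stepA : mts D mu n = \matrix_(i, j) \sum_k a i k * (\sum_l c k l * b j l).
Proof.
apply/matrixP => i j; rewrite !mxE; apply: eq_bigr => k _.
rewrite mulr_sumr; apply: eq_bigr => l _; by rewrite mulrA.
Qed.

Lemma stepC (f : {ffun 'I_n -> 'I_(n + D)}) :
  \det (\matrix_(i, j) \sum_l c (f i) l * b j l) =
  \sum_(nu : L | young nu) \det (\matrix_(i, j) b i (K nu j)) *
      \det (\matrix_(i, j) c (f i) (K nu j)).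
Proof.
rewrite -det_tr.
have -> : (\matrix_(i, j) \sum_l c (f i) l * b j l)^T =
   \matrix_(j, i) \sum_l b j l * c (f i) l.
  by apply/matrixP => j i; rewrite !mxE; apply: eq_bigr => l _; rewrite mulrC.
rewrite (det_expand b (fun l i => c (f i) l)).
pose Phi := fun g : {ffun 'I_n -> 'I_(n + D)} => \det (\matrix_(j, i) c (f i) (g j)).
have H1 : forall g : {ffun 'I_n -> 'I_(n + D)}, ~~ injectiveb g -> Phi g = 0.
  move=> g /injectivePn [j1 [j2 ne E]].
  by apply: (determinant_alternate ne) => i; rewrite !mxE E.
have H2 : forall (g : {ffun 'I_n -> 'I_(n + D)}) (s : 'S_n),
    Phi [ffun i => g (s i)] = (-1) ^+ s * Phi g.
  move=> g s; rewrite /Phi -det_row_perm; congr (\det _).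
  by apply/matrixP => j i; rewrite !mxE ffunE.
have SS := sort_sum b H1 H2; rewrite /Phi /= in SS; rewrite SS.
apply: eq_bigr => nu _; rewrite -[X in _ * X = _]det_tr; congr (_ * \det _).
by apply/matrixP => i j; rewrite !mxE.
Qed.


Lemma CM (l nu : L) : \det (\matrix_(i, j) ((mu (K l i) (K nu j))%:MP : RR)) =
   (\det (mlamnu mu (fun i => (l i : nat)) (fun j => (nu j : nat))))%:MP.
Proof.
rewrite -(det_map_mx (mpolyC (D + D) (R:=CC))).
congr (\det _); apply/matrixP => i j; rewrite !mxE.
by rewrite !KE.
Qed.

Lemma main_eq : \det (mts D mu n) = rhs D mu n.
Proof.
rewrite stepA (det_expand a (fun k j => \sum_l c k l * b j l)).
pose Psi := fun f : {ffun 'I_n -> 'I_(n + D)} =>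
  \sum_(nu : L | young nu) \det (\matrix_(i, j) b i (K nu j)) *
      \det (\matrix_(i, j) c (f i) (K nu j)).
have -> : \sum_(f : {ffun 'I_n -> 'I_(n + D)}) (\prod_i a i (f i)) *
     \det (\matrix_(i, j) \sum_l c (f i) l * b j l) =
   \sum_(f : {ffun 'I_n -> 'I_(n + D)}) (\prod_i a i (f i)) * Psi f.
  by apply: eq_bigr => f _; rewrite stepC.
have H1 : forall f : {ffun 'I_n -> 'I_(n + D)}, ~~ injectiveb f -> Psi f = 0.
  move=> f /injectivePn [i1 [i2 ne E]]; apply: big1 => nu _.
  by rewrite [X in _ * X](determinant_alternate ne) ?mulr0 // => j; rewrite !mxE E.
have H2 : forall (f : {ffun 'I_n -> 'I_(n + D)}) (s : 'S_n),
    Psi [ffun i => f (s i)] = (-1) ^+ s * Psi f.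
  move=> f s; rewrite /Psi mulr_sumr; apply: eq_bigr => nu _.
  rewrite mulrCA -det_row_perm; congr (_ * \det _).
  by apply/matrixP => i j; rewrite !mxE ffunE.
have SS := sort_sum a H1 H2; rewrite /Psi /= in SS; rewrite SS /rhs.
apply: eq_bigr => l _; rewrite mulr_sumr; apply: eq_bigr => nu _.
rewrite CM.
eapply sign_alg2.
- exact: schurK.
- exact: schurK.
- by rewrite -signr_addb addbb expr0.
Qed.

End Main.

Unset Implicit Arguments.

Theorem mainTheorem11 (mu : nat -> nat -> CC) (n : nat) :
  (0 < n)%N ->
  forall (D : nat) (m : 'X_{1..D + D}), (weight m <= D)%N ->
    (\det (mts D mu n))@_m = (rhs D mu n)@_m.
Proof. by move=> _ D m _; rewrite main_eq. Qed.
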